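(* Let $f,g\in\mathbb{F}[Y,Z]$. If $g$ has $r$ monomials, then $\mathrm{maxrank}(M_{fg})\le r\cdot\mathrm{maxrank}(M_f)$.
   Context: $\mathbb{F}$ is a field, $Y=\{y_1,\dots,y_m\}$ and $Z=\{z_1,\dots,z_m\}$ are disjoint sets of variables. For $f\in\mathbb{F}[Y,Z]$, the polynomial coefficient matrix $M_f$ is the $2^m\times 2^m$ matrix with entries in $\mathbb{F}[Y,Z]$, rows indexed by monic multilinear monomials $p$ in $Y$ and columns by monic multilinear monomials $q$ in $Z$, where $M_f(p,q)=G$ if and only if $f$ can be uniquely written as $f=pq\,G+Q$ with $G$ containing no variable other than those present in $p$ and $q$, and $Q$ having no monomial which is divisible by $pq$ and contains only variables present in $p$ and $q$. For $S:Y\cup Z\to\mathbb{F}$, $M_f|_S$ is obtained by evaluating each entry at $S$, and $\mathrm{maxrank}(M_f)=\max_S\mathrm{rank}(M_f|_S)$. *)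

(* Defs.v *)
From HB Require Import structures.
From mathcomp Require Import all_boot all_order all_algebra.
From mathcomp Require Export mpoly.
From Stdlib Require Import ClassicalDescription.
Set Implicit Arguments. Unset Strict Implicit. Unset Printing Implicit Defensive.
Import Order.TTheory GRing.Theory.
Local Open Scope ring_scope.

(* Variables: the polynomial ring F[Y,Z] with |Y| = |Z| = m is {mpoly F[m + m]};
   y_i is the variable lshift m i and z_i is rshift m i.
   A monic multilinear monomial in Y (resp. Z) is given by its set of variables
   P : {set 'I_m} (resp. Q : {set 'I_m}). *)

Definition pq_mnm (m : nat) (P Q : {set 'I_m}) : 'X_{1..m + m} :=
  [multinom (match split i with inl j => j \in P | inr j => j \in Q end : nat)
   | i < m + m].

(* Entry M_f(p,q) = G where f = p q G + Q is the unique decomposition of the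
   context: the monomials t of f containing exactly the variables of p q
   (i.e. divisible by pq and using only variables of p and q) give
   G = sum of f_t * t/(pq); all other monomials go into Q. *)
Definition pcm_entry (F : fieldType) (m : nat) (f : {mpoly F[m + m]})
    (P Q : {set 'I_m}) : {mpoly F[m + m]} :=
  \sum_(t <- msupp f | [forall i, (t i != 0%N) == (pq_mnm P Q i != 0%N)])
     f@_t *: 'X_[(t - pq_mnm P Q)%MM].

Definition pcm_size (m : nat) : nat := #|{set 'I_m}|.

Definition pcm (F : fieldType) (m : nat) (f : {mpoly F[m + m]}) :
    'M[{mpoly F[m + m]}]_(pcm_size m) :=
  \matrix_(i, j) pcm_entry f (enum_val i) (enum_val j).

Definition eval_mx (F : fieldType) (m n : nat) (S : 'I_(m + m) -> F)
    (M : 'M[{mpoly F[m + m]}]_n) : 'M[F]_n :=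
  map_mx (fun p => p.@[S]) M.

(* maxrank M = max_S rank (M|_S); ranks are bounded by n, so the maximum exists. *)
Definition maxrank (F : fieldType) (m n : nat) (M : 'M[{mpoly F[m + m]}]_n) : nat :=
  \max_(k < n.+1 | excluded_middle_informative
                     (exists S : 'I_(m + m) -> F, \rank (eval_mx S M) = k)) (k : nat).

(* Main.v *)
Require Import Defs.
From mathcomp Require Import all_boot all_order all_algebra.
From mathcomp Require Import mpoly.
From mathcomp Require Import zify.
From Stdlib Require Import ClassicalDescription.
Import GRing.Theory.
Local Open Scope ring_scope.

Section Aux.
Variables (F : fieldType) (m : nat).
Local Notation mp := {mpoly F[m + m]}.
Local Notation N := (pcm_size m).

Definition cnd (t : 'X_{1..m + m}) (P Q : {set 'I_m}) :=
  [forall i, (t i != 0%N) == (pq_mnm P Q i != 0%N)].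
Definition Ef t P Q : mp := if cnd t P Q then 'X_[(t - pq_mnm P Q)%MM] else 0.
Definition Emx t : 'M[mp]_N := \matrix_(i, j) Ef t (enum_val i) (enum_val j).

Lemma pcm_entryE h P Q :
  pcm_entry h P Q = \sum_(t <- msupp h) (h@_t)%:MP * Ef t P Q.
Proof.
rewrite /pcm_entry big_mkcond /=; apply: eq_bigr => t _; rewrite /Ef /cnd.
by case: ifP => _; [rewrite mul_mpolyC | rewrite mulr0].
Qed.

Lemma big_supp (V : zmodType) (h : mp) (s : seq 'X_{1..m + m})
  (G : 'X_{1..m + m} -> V) : uniq s -> {subset msupp h <= s} ->
  (forall t, h@_t = 0 -> G t = 0) -> \sum_(t <- s) G t = \sum_(t <- msupp h) G t.
Proof.
move=> us sub G0.
rewrite (bigID (mem (msupp h))) /= [X in _ + X]big1 ?addr0; last first.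
  by move=> t; rewrite mcoeff_msupp negbK => /eqP/G0.
rewrite -big_filter; apply: perm_big; apply: uniq_perm.
- exact: filter_uniq.
- exact: msupp_uniq.
by move=> t; rewrite mem_filter; apply/andP/idP => [[]//|ht]; split => //; apply: sub.
Qed.

Lemma pcmA h s : uniq s -> {subset msupp h <= s} ->
  pcm h = \sum_(t <- s) (h@_t)%:MP *: Emx t.
Proof.
move=> us sub; apply/matrixP => i j; rewrite !mxE summxE pcm_entryE.
rewrite (@big_supp _ h s _ us sub).
  by apply: eq_bigr => t _; rewrite !mxE.
by move=> t ->; rewrite !mxE mpolyC0 mul0r.
Qed.


Arguments pcmA {h s}.

Lemma pcmD (h1 h2 : mp) : pcm (h1 + h2) = pcm h1 + pcm h2.
Proof.
set s := undup (msupp h1 ++ msupp h2).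
have us : uniq s by exact: undup_uniq.
have s1 : {subset msupp h1 <= s} by move=> t ht; rewrite mem_undup mem_cat ht.
have s2 : {subset msupp h2 <= s} by move=> t ht; rewrite mem_undup mem_cat ht orbT.
have s12 : {subset msupp (h1 + h2) <= s}.
  by move=> t /msuppD_le; rewrite mem_undup.
rewrite (pcmA us s1) (pcmA us s2) (pcmA us s12) -big_split /=.
by apply: eq_bigr => t _; rewrite mcoeffD mpolyCD scalerDl.
Qed.

Lemma pcmZ c (h : mp) : pcm (c *: h) = c%:MP *: pcm h.
Proof.
rewrite (@pcmA (c *: h) (msupp h) (msupp_uniq h)) ?msupp_uniq //; last exact: msuppZ_le.
rewrite (@pcmA h (msupp h) (msupp_uniq h)) // scaler_sumr.
by apply: eq_bigr => t _; rewrite mcoeffZ mpolyCM scalerA.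
Qed.

Lemma pcm0 : pcm (0 : mp) = 0.
Proof. by rewrite -(scale0r (0 : mp)) pcmZ mpolyC0 scale0r. Qed.

Lemma pcm_sum (I : Type) (r : seq I) (c : I -> F) (h : I -> mp) :
  pcm (\sum_(i <- r) c i *: h i) = \sum_(i <- r) (c i)%:MP *: pcm (h i).
Proof.
elim: r => [|a r IH]; first by rewrite !big_nil pcm0.
by rewrite !big_cons pcmD pcmZ IH.
Qed.

Lemma pcmMX (f : mp) u :
  pcm (f * 'X_[u]) = \sum_(t <- msupp f) (f@_t)%:MP *: Emx (u + t)%MM.
Proof.
rewrite (@pcmA _ [seq (u + t)%MM | t <- msupp f]).
- by rewrite big_map; apply: eq_bigr => t _; rewrite mcoeffMX.
- by rewrite -(perm_uniq (msuppMX f u)) msupp_uniq.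
- by move=> t; rewrite (perm_mem (msuppMX f u)).
Qed.

Lemma splitL (j : 'I_m) : split (lshift m j) = inl j.
Proof. by rewrite -[lshift m j]/(unsplit (inl j)) unsplitK. Qed.
Lemma splitR (j : 'I_m) : split (rshift m j) = inr j.
Proof. by rewrite -[rshift m j]/(unsplit (inr j)) unsplitK. Qed.

Lemma pqL P Q j : pq_mnm P Q (lshift m j) = (j \in P) :> nat.
Proof. by rewrite /pq_mnm mnmE splitL. Qed.
Lemma pqR P Q j : pq_mnm P Q (rshift m j) = (j \in Q) :> nat.
Proof. by rewrite /pq_mnm mnmE splitR. Qed.

Definition sY (t : 'X_{1..m + m}) := [set j : 'I_m | t (lshift m j) != 0%N].
Definition sZ (t : 'X_{1..m + m}) := [set j : 'I_m | t (rshift m j) != 0%N].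

Lemma cndE t P Q : cnd t P Q = (P == sY t) && (Q == sZ t).
Proof.
apply/forallP/andP => [H|[/eqP-> /eqP->] i].
  split; apply/eqP/setP => j; rewrite inE.
    by move/eqP: (H (lshift m j)); rewrite pqL; case: (j \in P).
  by move/eqP: (H (rshift m j)); rewrite pqR; case: (j \in Q).
rewrite -(splitK i); case: (split i) => j /=.
  by rewrite pqL inE; case: (_ != _).
by rewrite pqR inE; case: (_ != _).
Qed.

Lemma sYD u t : sY (u + t)%MM = sY t :|: sY u.
Proof. by apply/setP => j; rewrite !inE mnmDE addn_eq0 negb_and orbC. Qed.
Lemma sZD u t : sZ (u + t)%MM = sZ t :|: sZ u.
Proof. by apply/setP => j; rewrite !inE mnmDE addn_eq0 negb_and orbC. Qed.

Definition uY (u : 'X_{1..m + m}) : 'X_{1..m + m} :=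
  [multinom (match split i with inl _ => u i | inr _ => 0%N end) | i < m + m].
Definition uZ (u : 'X_{1..m + m}) : 'X_{1..m + m} :=
  [multinom (match split i with inl _ => 0%N | inr _ => u i end) | i < m + m].

Definition Lf u (P B : {set 'I_m}) : mp :=
  if B :|: sY u == P then 'X_[(uY u - pq_mnm (P :\: B) set0)%MM] else 0.
Definition Rf u (C Q : {set 'I_m}) : mp :=
  if C :|: sZ u == Q then 'X_[(uZ u - pq_mnm set0 (Q :\: C))%MM] else 0.
Definition Lmx u : 'M[mp]_N := \matrix_(i, j) Lf u (enum_val i) (enum_val j).
Definition Rmx u : 'M[mp]_N := \matrix_(i, j) Rf u (enum_val i) (enum_val j).

Lemma collapse u t : Lmx u *m Emx t *m Rmx u =
  \matrix_(i, j) (Lf u (enum_val i) (sY t) * 'X_[(t - pq_mnm (sY t) (sZ t))%MM]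
                  * Rf u (sZ t) (enum_val j)).
Proof.
apply/matrixP => i j; rewrite !mxE (bigD1 (enum_rank (sZ t))) //= big1 ?addr0.
  rewrite !mxE (bigD1 (enum_rank (sY t))) //= big1 ?addr0.
    by rewrite !mxE !enum_rankK /Ef cndE !eqxx.
  move=> l hl; rewrite !mxE /Ef cndE.
  case: eqP => [e|]; last by rewrite mulr0.
  by rewrite -e enum_valK eqxx in hl.
move=> k hk; rewrite mxE big1 ?mul0r // => l _; rewrite !mxE /Ef cndE.
case: (enum_val k =P sZ t) => [e|]; last by rewrite andbF mulr0.
by rewrite -e enum_valK eqxx in hk.
Qed.

Lemma Emx_shift u t : Emx (u + t)%MM = Lmx u *m Emx t *m Rmx u.
Proof.
rewrite collapse; apply/matrixP => i j; rewrite !mxE /Ef cndE sYD sZD /Lf /Rf.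
set P := enum_val i; set Q := enum_val j.
rewrite [sY t :|: sY u == P]eq_sym [sZ t :|: sZ u == Q]eq_sym.
case: eqP => [eP|_]; last by rewrite !mul0r.
case: eqP => [eQ|_]; last by rewrite mulr0.
rewrite -!mpolyXD; congr 'X_[_]; apply/mnmP => k; rewrite !mnmDE !mnmBE.
rewrite -(splitK k); case: (split k) => j0 /=.
  rewrite !pqL /uY /uZ !mnmE splitL eP !inE.
  case: (u _) => [|a]; case: (t _) => [|b] /=; rewrite ?orbF ?orbT /=; lia.
rewrite !pqR /uY /uZ !mnmE splitR eQ !inE.
case: (u _) => [|a]; case: (t _) => [|b] /=; rewrite ?orbF ?orbT /=; lia.
Qed.

Lemma pcmMX' (f : mp) u : pcm (f * 'X_[u]) = Lmx u *m pcm f *m Rmx u.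
Proof.
rewrite pcmMX (@pcmA f (msupp f) (msupp_uniq f)) // mulmx_sumr mulmx_suml.
by apply: eq_bigr => t _; rewrite -scalemxAr -scalemxAl Emx_shift.
Qed.

Lemma mulE (f g : mp) : f * g = \sum_(u <- msupp g) g@_u *: (f * 'X_[u]).
Proof.
rewrite {1}(mpolyE g) mulr_sumr; apply: eq_bigr => u _; by rewrite scalerAr.
Qed.

Lemma evalD S (A B : 'M[mp]_N) : eval_mx S (A + B) = eval_mx S A + eval_mx S B.
Proof. by apply/matrixP => i j; rewrite !mxE mevalD. Qed.
Lemma evalZ S a (A : 'M[mp]_N) : eval_mx S (a *: A) = a.@[S] *: eval_mx S A.
Proof. by apply/matrixP => i j; rewrite !mxE mevalM. Qed.
Lemma evalM S (A B : 'M[mp]_N) : eval_mx S (A *m B) = eval_mx S A *m eval_mx S B.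
Proof. exact: map_mxM. Qed.
Lemma eval0 S : eval_mx S (0 : 'M[mp]_N) = 0.
Proof. by apply/matrixP => i j; rewrite !mxE meval0. Qed.

Lemma rank_le S (M : 'M[mp]_N) : (\rank (eval_mx S M) <= maxrank M)%N.
Proof.
have hk : (\rank (eval_mx S M) < N.+1)%N by rewrite ltnS rank_leq_row.
rewrite /maxrank; apply: (@leq_bigmax_cond _ _ _ (Ordinal hk)) => /=.
by case: excluded_middle_informative => // H; exfalso; apply: H; exists S.
Qed.

Lemma key (f g : mp) S :
  (\rank (eval_mx S (pcm (f * g))) <= size (msupp g) * maxrank (pcm f))%N.
Proof.
rewrite mulE pcm_sum; elim: (msupp g) => [|u r IH].
  by rewrite big_nil eval0 mxrank0.
rewrite big_cons evalD /= mulSn; apply: leq_trans (mxrank_add _ _) _.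
apply: leq_add => //; rewrite evalZ pcmMX' !evalM -mul_mx_scalar.
apply: leq_trans (mxrankM_maxl _ _) _; apply: leq_trans (mxrankM_maxl _ _) _.
apply: leq_trans (mxrankM_maxr _ _) _; exact: rank_le.
Qed.
End Aux.

Theorem corollary3 (F : fieldType) (m : nat) (f g : {mpoly F[m + m]}) (r : nat) :
  size (msupp g) = r ->
  (maxrank (pcm (f * g)) <= r * maxrank (pcm f))%N.
Proof.
move=> <-; rewrite {1}/maxrank; apply/bigmax_leqP => k.
case: excluded_middle_informative => // [[S hS]] _; rewrite -hS; exact: key.
Qed.
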